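(* Let $j\ge2$, let $H$ be a graph, and let $G\cong\mathsf{TS}_j(H)$. Write $q=\omega(G)$ and, for a graph $X$ and integer $t$, let $c_t(X)$ be the number of $t$-cliques of $X$. If $q\ge j+2$, then \[ c_q(G)=\binom{q+j-1}{j-1}\,c_{q+j-1}(H); \] in particular $\binom{q+j-1}{j-1}$ divides $c_q(G)$.
   Context: All graphs are finite, simple, undirected; $\omega(G)$ is the clique number. A $k$-clique of a graph $H$ is a set of $k$ pairwise adjacent vertices. For a graph $H$ and integer $k\ge1$, the Token Sliding graph $\mathsf{TS}_k(H)$ has as vertices the $k$-cliques of $H$, and two $k$-cliques $A,B$ are adjacent iff $A\setminus B=\{u\}$, $B\setminus A=\{v\}$ for some vertices $u,v$ with $uv\in E(H)$. *)

(* Defs.v *)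
From mathcomp Require Import all_boot.
Set Implicit Arguments. Unset Strict Implicit. Unset Printing Implicit Defensive.

Definition simple_graph (T : finType) (e : rel T) : Prop :=
  symmetric e /\ irreflexive e.

Definition is_clique (T : finType) (e : rel T) (A : {set T}) : bool :=
  [forall x in A, forall y in A, (x != y) ==> e x y].

Definition cliques (T : finType) (e : rel T) (k : nat) : {set {set T}} :=
  [set A : {set T} | is_clique e A && (#|A| == k)].

Definition nclq (T : finType) (e : rel T) (k : nat) : nat := #|cliques e k|.

Definition clique_number (T : finType) (e : rel T) : nat :=
  \max_(A : {set T} | is_clique e A) #|A|.

Definition ts_adj (T : finType) (e : rel T) (A B : {set T}) : bool :=
  [exists u, exists v, [&& A :\: B == [set u], B :\: A == [set v] & e u v]].

(* f : G -> {set T} is a graph isomorphism from (G, eG) onto TS_j(H):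
   a bijection onto the j-cliques of H, transporting adjacency to
   token-sliding adjacency. *)
Definition TS_iso (T : finType) (eH : rel T) (j : nat)
    (G : finType) (eG : rel G) (f : G -> {set T}) : Prop :=
  [/\ injective f,
      (forall x, f x \in cliques eH j),
      (forall A, A \in cliques eH j -> exists x, f x = A) &
      (forall x y, eG x y = ts_adj eH (f x) (f y))].

(* Main.v *)
Require Import Defs.
From mathcomp Require Import all_boot zify.
Set Implicit Arguments. Unset Strict Implicit. Unset Printing Implicit Defensive.

Lemma one_elem (T : finType) (X : {set T}) a b :
  #|X| = 1 -> a \in X -> b \in X -> a = b.
Proof.
move/eqP/cards1P=> [w ->]; rewrite !inE => /eqP -> /eqP -> //.
Qed.

Lemma cardU_dist (T : finType) (j : nat) (A B : {set T}) :
  #|A| = j -> #|B| = j -> #|A :\: B| = 1 -> #|A :|: B| = j.+1 /\ #|A :&: B| = j.-1.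
Proof.
move=> hA hB hD; have := cardsUI A B; have := cardsID B A; lia.
Qed.

Section SF.
Context (T : finType) (j : nat) (F : {set {set T}}).
Hypothesis hj : forall A, A \in F -> #|A| = j.
Hypothesis hd : forall A B, A \in F -> B \in F -> A != B -> #|A :\: B| = 1.

Lemma sf_claim (A B D : {set T}) (s : T) : A \in F -> B \in F -> D \in F -> A != B ->
  s \in A -> s \in B -> s \notin D -> D = (A :|: B) :\ s.
Proof.
move=> AF BF DF AB sA sB sD.
have DA : A != D by apply/eqP=> e; move: sD; rewrite -e sA.
have DB : B != D by apply/eqP=> e; move: sD; rewrite -e sB.
have hAD := hd AF DF DA; have hBD := hd BF DF DB.
have [hU _] := cardU_dist (hj AF) (hj BF) (hd AF BF AB).
have sub : (A :|: B) :\ s \subset D.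
  apply/subsetP=> t; rewrite !inE => /andP[ts tAB].
  apply/negPn/negP=> tD; move: ts; case/orP: tAB => tX.
  - have e : t = s by apply: (one_elem hAD); rewrite inE ?tX ?sA ?tD ?sD.
    by rewrite e eqxx.
  - have e : t = s by apply: (one_elem hBD); rewrite inE ?tX ?sB ?tD ?sD.
    by rewrite e eqxx.
apply/esym/eqP; rewrite eqEcard sub /=.
have := cardsD1 s (A :|: B); rewrite inE sA /= hU (hj DF); lia.
Qed.

Lemma sunflower : 1 <= j -> j + 2 <= #|F| ->
  exists S : {set T}, #|S| = j.-1 /\ forall A, A \in F -> S \subset A.
Proof.
move=> j1 hF0; have hF : j + 2 <= #|F| by exact: hF0.
have [A AF] : exists A : {set T}, A \in F.
  by apply/set0Pn; rewrite -card_gt0; apply: leq_trans hF; rewrite addn2.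
have [B BF] : exists B : {set T}, B \in F :\ A.
  apply/set0Pn; rewrite -card_gt0; move: hF; rewrite (cardsD1 A F) AF add1n addn2 ltnS => h; exact: leq_trans (ltn0Sn j) h.
move: BF; rewrite !inE => /andP[BA BF]; rewrite eq_sym in BA.
have [hU hI] := cardU_dist (hj AF) (hj BF) (hd AF BF BA).
exists (A :&: B); split => // C CF.
apply/subsetP=> s sAB; case: (boolP (s \in C)) => // sC; exfalso.
have [sA sB] : s \in A /\ s \in B by move: sAB; rewrite inE => /andP.
have eC := sf_claim AF BF CF BA sA sB sC.
have CU : C \subset A :|: B by rewrite eC subD1set.
have AC : A != C by apply/eqP=> e; move: sC; rewrite -e sA.
have allU : F \subset [set X : {set T} | X \subset A :|: B & #|X| == j].
  apply/subsetP=> D DF; rewrite inE (hj DF) eqxx andbT.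
  case: (boolP (s \in D)) => sD; last by rewrite (sf_claim AF BF DF BA sA sB sD) subD1set.
  case: (boolP (A :&: C \subset D)) => hACD; last first.
    have [s' s'AC s'D] : exists2 s', s' \in A :&: C & s' \notin D.
      move/subsetPn: hACD => [s' ? ?]; by exists s'.
    move: s'AC; rewrite inE => /andP[s'A s'C].
    rewrite (sf_claim AF CF DF AC s'A s'C s'D).
    apply: subset_trans (subD1set _ _) _; by rewrite subUset subsetUl CU.
  have AD : A \subset D.
    apply/subsetP=> t tA; case: (eqVneq t s) => [-> //|ts].
    apply: (subsetP hACD); rewrite inE tA eC !inE ts tA //.
  have -> : D = A.
    apply/esym/eqP; rewrite eqEcard AD (hj AF) (hj DF) leqnn //.
  exact: subsetUl.
have := subset_leq_card allU; rewrite cards_draws hU binSn; lia.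
Qed.
End SF.


Lemma is_cliqueP (T : finType) (e : rel T) (A : {set T}) :
  reflect (forall x y, x \in A -> y \in A -> x != y -> e x y) (is_clique e A).
Proof.
apply: (iffP forall_inP) => [h x y xA yA xy | h x xA].
  by move: (h x xA) => /forall_inP /(_ y yA) /implyP; apply.
by apply/forall_inP => y yA; apply/implyP; apply: h.
Qed.

Lemma clique_sub (T : finType) (e : rel T) (A B : {set T}) :
  is_clique e B -> A \subset B -> is_clique e A.
Proof.
move=> /is_cliqueP h sAB; apply/is_cliqueP => x y xA yA; apply: h; exact: (subsetP sAB).
Qed.

Lemma decomp (T : finType) (j : nat) (A S : {set T}) :
  1 <= j -> S \subset A -> #|A| = j -> #|S| = j.-1 ->
  exists2 u, u \notin S & A = u |: S.
Proof.
move=> j1 SA hA hS.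
have : #|A :\: S| == 1.
  have := cardsID S A; rewrite (setIidPr SA); lia.
move/cards1P => [u hu].
have uA : u \in A :\: S by rewrite hu set11.
move: uA; rewrite inE => /andP[uS uA]; exists u => //.
apply/setP=> w; rewrite !inE; case: (eqVneq w u) => [->|wu] //=.
case: (boolP (w \in S)) => wS; first by rewrite (subsetP SA).
apply/negbTE; apply/negP => wA.
have : w \in A :\: S by rewrite inE wS wA.
by rewrite hu inE (negbTE wu).
Qed.

Lemma setU1_inj (T : finType) (S : {set T}) (u v : T) :
  u \notin S -> v \notin S -> u |: S = v |: S -> u = v.
Proof.
move=> uS vS e; have : u \in v |: S by rewrite -e setU11.
case/setU1P => // h; by rewrite h in uS.
Qed.

Section M.
Context (T : finType) (eH : rel T) (j : nat) (G : finType) (eG : rel G)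
  (f : G -> {set T}).

Definition phi (K S : {set T}) := [set x | (S \subset f x) && (f x \subset K)].

Lemma surj_U (K S : {set T}) u : TS_iso eH j eG f -> 1 <= j -> is_clique eH K ->
  S \subset K -> #|S| = j.-1 -> u \in K -> u \notin S ->
  exists2 x, x \in phi K S & f x = u |: S.
Proof.
move=> [finj fcl fsurj fadj] j1 cK SK hS uK uS.
have : u |: S \in cliques eH j.
  rewrite inE cardsU1 uS hS; apply/andP; split; last by apply/eqP; lia.
  by apply: clique_sub cK _; rewrite subUset sub1set uK SK.
move/fsurj=> [x hx]; exists x => //.
by rewrite inE hx subsetUr subUset sub1set uK SK.
Qed.

Lemma f_phi (K S : {set T}) : TS_iso eH j eG f -> 1 <= j -> is_clique eH K ->
  S \subset K -> #|S| = j.-1 ->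
  f @: phi K S = (fun u => u |: S) @: (K :\: S).
Proof.
move=> hiso j1 cK SK hS; have [finj fcl fsurj fadj] := hiso.
apply/setP=> A; apply/imsetP/imsetP.
  move=> [x]; rewrite inE => /andP[Sx xK] ->.
  have hx : #|f x| = j by move: (fcl x); rewrite inE => /andP[_ /eqP].
  have [u uS ex] := decomp j1 Sx hx hS.
  exists u => //; rewrite inE uS /= (subsetP xK) // ex setU11 //.
move=> [u]; rewrite inE => /andP[uS uK] ->.
have [x xp ex] := surj_U hiso j1 cK SK hS uK uS.
by exists x.
Qed.

Lemma card_phi (K S : {set T}) : TS_iso eH j eG f -> 1 <= j -> is_clique eH K ->
  S \subset K -> #|S| = j.-1 -> #|phi K S| = #|K| - j.-1.
Proof.
move=> hiso j1 cK SK hS; have [finj fcl fsurj fadj] := hiso.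
rewrite -(card_imset _ finj) f_phi // card_in_imset.
  have := cardsID S K; rewrite (setIidPr SK); lia.
move=> u v; rewrite !inE => /andP[uS _] /andP[vS _]; exact: setU1_inj.
Qed.

Lemma clique_phi (K S : {set T}) : TS_iso eH j eG f -> 1 <= j -> is_clique eH K ->
  S \subset K -> #|S| = j.-1 -> is_clique eG (phi K S).
Proof.
move=> hiso j1 cK SK hS; have [finj fcl fsurj fadj] := hiso.
apply/is_cliqueP => x y; rewrite !inE => /andP[Sx xK] /andP[Sy yK] xy.
have hx : #|f x| = j by move: (fcl x); rewrite inE => /andP[_ /eqP].
have hy : #|f y| = j by move: (fcl y); rewrite inE => /andP[_ /eqP].
have [u uS ex] := decomp j1 Sx hx hS.
have [v vS ey] := decomp j1 Sy hy hS.
have uv : u != v.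
  by apply/eqP=> e; move: xy; rewrite -(inj_eq finj) ex ey e eqxx.
rewrite fadj; apply/existsP; exists u; apply/existsP; exists v.
have D : forall a b, a \notin S -> b \notin S -> a != b ->
    (a |: S) :\: (b |: S) == [set a].
  move=> a b aS bS ab; apply/eqP/setP=> w; rewrite !inE.
  case: (eqVneq w a) => [->|wa]; first by rewrite (negbTE aS) (negbTE ab).
  idtac.
  by case: (w \in S); rewrite /= ?andbF ?orbT.
rewrite ex ey !D // 1?eq_sym //=.
move/is_cliqueP: cK; apply => //.
  by apply: (subsetP xK); rewrite ex setU11.
by apply: (subsetP yK); rewrite ey setU11.
Qed.

Lemma union_clique (C : {set G}) : TS_iso eH j eG f -> is_clique eG C ->
  is_clique eH (\bigcup_(x in C) f x).
Proof.
move=> [finj fcl fsurj fadj] cC.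
have cf : forall x, is_clique eH (f x) by move=> x; move: (fcl x); rewrite inE => /andP[].
apply/is_cliqueP => a b /bigcupP[x xC ax] /bigcupP[y yC bY] ab.
case: (eqVneq x y) => [exy|xy].
  by move/is_cliqueP: (cf x); apply => //; rewrite exy.
case: (boolP (a \in f y)) => ay; first by move/is_cliqueP: (cf y); apply.
case: (boolP (b \in f x)) => bx; first by move/is_cliqueP: (cf x); apply.
move/is_cliqueP: cC => /(_ x y xC yC xy); rewrite fadj.
move=> /existsP[u /existsP[v /and3P[/eqP hu /eqP hv euv]]].
have : a \in f x :\: f y by rewrite inE ay ax.
rewrite hu inE => /eqP ->.
have : b \in f y :\: f x by rewrite inE bx bY.
by rewrite hv inE => /eqP ->.
Qed.

End M.

Theorem proposition3p10 (T : finType) (eH : rel T) (j : nat)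
    (G : finType) (eG : rel G) (f : G -> {set T}) :
  simple_graph eH -> simple_graph eG -> 2 <= j -> TS_iso eH j eG f ->
  let q := clique_number eG in
  j + 2 <= q ->
  nclq eG q = 'C(q + j - 1, j - 1) * nclq eH (q + j - 1) /\
  'C(q + j - 1, j - 1) %| nclq eG q.
Proof.
move=> sH sG j2 hiso q hq.
have j1 : 1 <= j by lia.
have [finj fcl fsurj fadj] := hiso.
have qmax : forall C : {set G}, is_clique eG C -> #|C| <= q.
  by move=> C cC; rewrite /q /clique_number; exact: (@leq_bigmax_cond _ (fun A => is_clique eG A) (fun A => #|A|) C cC).
pose P := [set KS : {set T} * {set T} | (KS.1 \in cliques eH (q + j - 1)) &&
             ((KS.2 \subset KS.1) && (#|KS.2| == j.-1))].
pose ph := fun KS : {set T} * {set T} => phi f KS.1 KS.2.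
have cP : #|P| = 'C(q + j - 1, j - 1) * nclq eH (q + j - 1).
  rewrite -sum1_card.
  rewrite (eq_bigl (fun KS : {set T} * {set T} => (KS.1 \in cliques eH (q + j - 1)) &&
             ((KS.2 \subset KS.1) && (#|KS.2| == j.-1)))); last by move=> KS; rewrite inE.
  rewrite -(pair_big_dep (fun K : {set T} => K \in cliques eH (q + j - 1))
     (fun (K S : {set T}) => (S \subset K) && (#|S| == j.-1)) (fun _ _ => 1)) /=.
  rewrite (eq_bigr (fun _ => 'C(q + j - 1, j - 1))).
    by rewrite sum_nat_const /nclq mulnC.
  move=> K; rewrite inE => /andP[_ /eqP hK].
  by rewrite -hK subn1 -cards_draws -sum1_card; apply: eq_bigl => S; rewrite inE.
have E1 : cliques eG q = ph @: P.
  apply/setP=> C; apply/idP/imsetP.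
    rewrite inE => /andP[cC /eqP hC].
    pose F := f @: C.
    have hFj : forall A, A \in F -> #|A| = j.
      by move=> A /imsetP[x _ ->]; move: (fcl x); rewrite inE => /andP[_ /eqP].
    have hFd : forall A B, A \in F -> B \in F -> A != B -> #|A :\: B| = 1.
      move=> A B /imsetP[x xC ->] /imsetP[y yC ->] AB.
      have xy : x != y by apply: contraNneq AB => ->.
      move/is_cliqueP: cC => /(_ x y xC yC xy); rewrite fadj.
      by move=> /existsP[u /existsP[v /and3P[/eqP -> _ _]]]; rewrite cards1.
    have hF : j + 2 <= #|F| by rewrite card_in_imset ?hC // => x y _ _; apply: finj.
    have [S [hS SF]] := sunflower hFj hFd j1 hF.
    pose K := \bigcup_(x in C) f x.
    have cK : is_clique eH K := union_clique hiso cC.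
    have [x0 x0C] : exists x0, x0 \in C.
      by apply/set0Pn; rewrite -card_gt0 hC; lia.
    have SK : S \subset K.
      apply: subset_trans (SF _ (imset_f f x0C)) _; exact: bigcup_sup.
    have Cph : C \subset phi f K S.
      apply/subsetP=> x xC; rewrite inE (SF _ (imset_f f xC)) /=; exact: bigcup_sup.
    have cph := clique_phi hiso j1 cK SK hS.
    have hph := card_phi hiso j1 cK SK hS.
    have l1 := qmax _ cph; have l2 := subset_leq_card Cph.
    have SKc := subset_leq_card SK.
    exists (K, S).
      rewrite inE /= SK hS eqxx andbT inE cK /=; apply/eqP; lia.
    apply/eqP; rewrite /ph /= eqEcard Cph /=; lia.
  move=> [[K S]]; rewrite inE /= => /and3P[]; rewrite inE => /andP[cK /eqP hK] SK /eqP hS ->.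
  rewrite inE /ph /= (clique_phi hiso j1 cK SK hS) /= (card_phi hiso j1 cK SK hS) hK; apply/eqP; lia.
have inj : {in P &, injective ph}.
  move=> [K S] [K' S']; rewrite !inE /= /ph /=.
  move=> /and3P[]; move=> /andP[cK /eqP hK] SK /eqP hS.
  move=> /and3P[]; move=> /andP[cK' /eqP hK'] SK' /eqP hS' e.
  have two : forall K S : {set T}, is_clique eH K -> #|K| = q + j - 1 -> S \subset K -> #|S| = j.-1 ->
     (forall u, u \in K -> exists2 x, x \in phi f K S & u \in f x) /\
     (forall u, u \notin S -> exists2 x, x \in phi f K S & u \notin f x).
    move=> K0 S0 cK0 hK0 SK0 hS0.
    have hD : #|K0 :\: S0| = q.
      have := cardsID S0 K0; rewrite (setIidPr SK0); lia.
    split.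
      move=> u uK; case: (boolP (u \in S0)) => uS.
        have [w] : exists w, w \in K0 :\: S0 by apply/set0Pn; rewrite -card_gt0 hD; lia.
        rewrite inE => /andP[wS wK].
        have [x xp ex] := surj_U hiso j1 cK0 SK0 hS0 wK wS.
        by exists x => //; rewrite ex inE uS orbT.
      have [x xp ex] := surj_U hiso j1 cK0 SK0 hS0 uK uS.
      by exists x => //; rewrite ex setU11.
    move=> u uS.
    have [w] : exists w, w \in (K0 :\: S0) :\ u.
      apply/set0Pn; rewrite -card_gt0; have := cardsD1 u (K0 :\: S0); rewrite hD.
      case: (u \in K0 :\: S0) => /=; lia.
    rewrite !inE => /and3P[wu wS wK].
    have [x xp ex] := surj_U hiso j1 cK0 SK0 hS0 wK wS.
    by exists x => //; rewrite ex !inE (negbTE uS) orbF eq_sym.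
  have [h1 h2] := two K S cK hK SK hS.
  have [h1' h2'] := two K' S' cK' hK' SK' hS'.
  have KK : forall K S K' S' : {set T}, (forall u, u \in K -> exists2 x, x \in phi f K S & u \in f x) ->
     phi f K S = phi f K' S' -> K \subset K'.
    move=> K1 S1 K2 S2 h e0; apply/subsetP=> u uK; have [x xp ux] := h u uK.
    by move: xp; rewrite e0 inE => /andP[_ /subsetP]; apply.
  have SS : forall K S K' S' : {set T}, S \subset K -> (forall u, u \notin S' -> exists2 x, x \in phi f K' S' & u \notin f x) ->
     phi f K S = phi f K' S' -> S \subset S'.
    move=> K1 S1 K2 S2 _ h e0; apply/subsetP=> u uS; apply/negPn/negP => uS'.
    have [x xp ux] := h u uS'; move: xp; rewrite -e0 inE => /andP[/subsetP sx _].
    by move: ux; rewrite sx.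
  congr (_, _); apply/eqP; rewrite eqEsubset.
    by rewrite (KK _ _ _ _ h1 e) (KK _ _ _ _ h1' (esym e)).
  by rewrite (SS _ _ _ _ SK h2' e) (SS _ _ _ _ SK' h2 (esym e)).
have eq : nclq eG q = 'C(q + j - 1, j - 1) * nclq eH (q + j - 1).
  by rewrite /nclq E1 card_in_imset // -cP.
by split => //; rewrite eq dvdn_mulr.
Qed.
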